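(* Let $\Phi$ be a real $N\times d$ matrix satisfying the Restricted Isometry Condition with parameters $(2n,\varepsilon)$, $\varepsilon = 0.03/\sqrt{\log n}$, let $v \ne 0$ be $n$-sparse, $x = \Phi v$, and consider an iteration of ROMP run on $x$ with sparsity level $n$, with $I$ the index set and $r\ne 0$ the residual at the start of that iteration. Let $v_0 = v|_{\mathrm{supp}(v)\setminus I}$ (equal to $v$ on $\mathrm{supp}(v)\setminus I$, $0$ elsewhere), $x_0 = \Phi v_0$, $u_0 = \Phi^* x_0$ and $u = \Phi^* r$. Then for every set $T \subset \{1,\dots,d\}$ with $|T|\le 2n$, $\|(u_0 - u)|_T\|_2 \le 2.4\,\varepsilon\,\|v_0\|_2$.
   Context: A vector is $n$-sparse if it has at most $n$ nonzero coordinates. $\Phi$ satisfies the Restricted Isometry Condition with parameters $(m,\varepsilon)$ if $(1-\varepsilon)\|w\|_2 \le \|\Phi w\|_2 \le (1+\varepsilon)\|w\|_2$ for all $m$-sparse $w$. $y|_T$ is the restriction of $y$ to coordinates in $T$. ROMP with input $x$ and sparsity level $n$: Initialize $I=\emptyset$, $r=x$. Repeat until $r=0$: (Identify) $u=\Phi^*r$, choose a set $J$ of the $n$ biggest coordinates of $u$ in magnitude, or all nonzero coordinates of $u$, whichever set is smaller; (Regularize) among subsets $J_0\subset J$ with $|u(i)|\le 2|u(j)|$ for all $i,j\in J_0$, choose one maximizing $\|u|_{J_0}\|_2$; (Update) $I\leftarrow I\cup J_0$, $y=\operatorname{argmin}_{z\in\mathbb{R}^I}\|x-\Phi z\|_2$,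 $r=x-\Phi y$. Output $I$. *)

(* Defs.v *)
From HB Require Import structures.
From mathcomp Require Import all_boot all_order all_algebra.
From mathcomp Require Import reals exp.
Set Implicit Arguments. Unset Strict Implicit. Unset Printing Implicit Defensive.
Import Order.TTheory GRing.Theory Num.Theory.
Local Open Scope ring_scope.

Section ROMP.
Variable R : realType.

Definition norm2 (d : nat) (w : 'cV[R]_d) : R :=
  Num.sqrt (\sum_(i < d) w i 0 ^+ 2).

Definition supp (d : nat) (w : 'cV[R]_d) : {set 'I_d} := [set i | w i 0 != 0].

Definition sparse (d m : nat) (w : 'cV[R]_d) : Prop := (#|supp w| <= m)%N.

Definition RIC (N d : nat) (Phi : 'M[R]_(N, d)) (m : nat) (eps : R) : Prop :=
  forall w : 'cV[R]_d, sparse m w ->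
    (1 - eps) * norm2 w <= norm2 (Phi *m w) /\
    norm2 (Phi *m w) <= (1 + eps) * norm2 w.

Definition restrict (d : nat) (T : {set 'I_d}) (y : 'cV[R]_d) : 'cV[R]_d :=
  \col_i (if i \in T then y i 0 else 0).

Definition is_residual (N d : nat) (Phi : 'M[R]_(N, d)) (x : 'cV[R]_N)
    (I : {set 'I_d}) (r : 'cV[R]_N) : Prop :=
  exists y : 'cV[R]_d, supp y \subset I /\
    (forall z : 'cV[R]_d, supp z \subset I ->
        norm2 (x - Phi *m y) <= norm2 (x - Phi *m z)) /\
    r = x - Phi *m y.

Definition identify (d n : nat) (u : 'cV[R]_d) (J : {set 'I_d}) : Prop :=
  if (#|supp u| <= n)%N then J = supp u
  else #|J| = n /\ (forall i j, i \in J -> j \notin J -> `|u j 0| <= `|u i 0|).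

Definition comparable (d : nat) (u : 'cV[R]_d) (J0 : {set 'I_d}) : Prop :=
  forall i j, i \in J0 -> j \in J0 -> `|u i 0| <= 2 * `|u j 0|.

Definition regularize (d : nat) (u : 'cV[R]_d) (J J0 : {set 'I_d}) : Prop :=
  J0 \subset J /\ comparable u J0 /\
  (forall J1 : {set 'I_d}, J1 \subset J -> comparable u J1 ->
     norm2 (restrict J1 u) <= norm2 (restrict J0 u)).

Definition romp_step (N d : nat) (Phi : 'M[R]_(N, d)) (x : 'cV[R]_N) (n : nat)
    (I : {set 'I_d}) (r : 'cV[R]_N) (I' : {set 'I_d}) (r' : 'cV[R]_N) : Prop :=
  r != 0 /\
  exists J J0 : {set 'I_d},
    let u := Phi^T *m r in
    identify n u J /\ regularize u J J0 /\ I' = I :|: J0 /\ is_residual Phi x I' r'.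

Inductive romp_state (N d : nat) (Phi : 'M[R]_(N, d)) (x : 'cV[R]_N) (n : nat) :
    {set 'I_d} -> 'cV[R]_N -> Prop :=
  | romp_init : romp_state Phi x n set0 x
  | romp_next : forall I r I' r', romp_state Phi x n I r ->
      romp_step Phi x n I r I' r' -> romp_state Phi x n I' r'.

End ROMP.

(* Main.v *)
Require Import Defs.
From HB Require Import structures.
From mathcomp Require Import all_boot all_order all_algebra.
From mathcomp Require Import reals exp.
From mathcomp Require Import ring lra zify.
Import Order.TTheory GRing.Theory Num.Theory.
Local Open Scope ring_scope.

Set Implicit Arguments. Unset Strict Implicit. Unset Printing Implicit Defensive.

Section Basic.
Variable R : realType.
Variable d : nat.
Implicit Types a b w z : 'cV[R]_d.

Definition nsq w : R := \sum_(i < d) w i 0 ^+ 2.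
Definition dot a b : R := \sum_(i < d) a i 0 * b i 0.

Lemma nsq_ge0 w : 0 <= nsq w.
Proof. by apply: sumr_ge0 => i _; rewrite sqr_ge0. Qed.

Lemma norm2_ge0 w : 0 <= norm2 w.
Proof. exact: sqrtr_ge0. Qed.

Lemma sqr_norm2 w : norm2 w ^+ 2 = nsq w.
Proof. by rewrite /norm2 sqr_sqrtr // nsq_ge0. Qed.

Lemma dotC a b : dot a b = dot b a.
Proof. by apply: eq_bigr => i _; rewrite mulrC. Qed.

Lemma dotww w : dot w w = nsq w.
Proof. by apply: eq_bigr => i _; rewrite expr2. Qed.

Lemma dotDl a b z : dot (a + b) z = dot a z + dot b z.
Proof. by rewrite /dot -big_split; apply: eq_bigr => i _; rewrite !mxE mulrDl. Qed.

Lemma dotNl a z : dot (- a) z = - dot a z.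
Proof. by rewrite /dot -sumrN; apply: eq_bigr => i _; rewrite !mxE mulNr. Qed.

Lemma dotZl (c : R) a z : dot (c *: a) z = c * dot a z.
Proof. by rewrite /dot mulr_sumr; apply: eq_bigr => i _; rewrite !mxE mulrA. Qed.

Lemma dotBl a b z : dot (a - b) z = dot a z - dot b z.
Proof. by rewrite dotDl dotNl. Qed.

Lemma dotDr a b z : dot z (a + b) = dot z a + dot z b.
Proof. by rewrite dotC dotDl !(dotC z). Qed.
Lemma dotBr a b z : dot z (a - b) = dot z a - dot z b.
Proof. by rewrite dotC dotBl !(dotC z). Qed.
Lemma dotZr (c : R) a z : dot z (c *: a) = c * dot z a.
Proof. by rewrite dotC dotZl dotC. Qed.

Lemma dot0l z : dot 0 z = 0.
Proof. by apply: big1 => i _; rewrite mxE mul0r. Qed.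
Lemma dot0r z : dot z 0 = 0.
Proof. by apply: big1 => i _; rewrite mxE mulr0. Qed.
Lemma norm20 : norm2 (0 : 'cV[R]_d) = 0.
Proof. by rewrite /norm2 big1 ?sqrtr0 // => i _; rewrite mxE expr0n. Qed.

Lemma nsq0 w : nsq w = 0 -> w = 0.
Proof.
move=> h; apply/matrixP => i j; rewrite (ord1 j) mxE.
have := h; rewrite /nsq => /eqP; rewrite psumr_eq0 => [/allP/(_ i)|].
  by rewrite mem_index_enum => /(_ isT) /implyP /(_ isT); rewrite sqrf_eq0 => /eqP.
by move=> k _; rewrite sqr_ge0.
Qed.

Lemma CS a b : dot a b <= norm2 a * norm2 b.
Proof.
set A := nsq a; set B := nsq b; set C := dot a b.
have hA : 0 <= A := nsq_ge0 a. have hB : 0 <= B := nsq_ge0 b.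
have key : C ^+ 2 <= A * B.
  have h0 : 0 <= nsq (B *: a - C *: b) := nsq_ge0 _.
  rewrite -dotww !(dotBl, dotBr, dotZl, dotZr) !dotww (dotC b a) -/A -/B -/C in h0.
  have [B0|Bpos] := eqVneq B 0.
    have b0 : b = 0 := nsq0 B0.
    have : C = 0 by rewrite /C b0 /dot big1 // => i _; rewrite mxE mulr0.
    by move=> ->; rewrite B0 expr2 !mulr0.
  have Bp : 0 < B by rewrite lt_def Bpos hB.
  nra.
have : `|C| <= norm2 a * norm2 b.
  rewrite /norm2 -sqrtrM // -(sqrtr_sqr C) ler_sqrt; last by apply: mulr_ge0.
  exact: key.
by apply: le_trans; exact: ler_norm.
Qed.

Lemma nsqD a b : nsq (a + b) = nsq a + 2 * dot a b + nsq b.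
Proof. rewrite -!dotww !(dotDl, dotDr) (dotC b a); ring. Qed.

Lemma nsqN a : nsq (- a) = nsq a.
Proof. by rewrite -!dotww dotNl dotC dotNl opprK. Qed.

Lemma norm2N a : norm2 (- a) = norm2 a.
Proof. by rewrite /norm2 -/(nsq _) nsqN. Qed.

Lemma norm2_tri a b : norm2 (a + b) <= norm2 a + norm2 b.
Proof.
have h := CS a b. have h1 := norm2_ge0 a. have h2 := norm2_ge0 b.
have h3 := norm2_ge0 (a + b).
have e1 := sqr_norm2 a. have e2 := sqr_norm2 b. have e3 := sqr_norm2 (a + b).
rewrite nsqD in e3. nra.
Qed.

Lemma norm2_triB a b : norm2 (a - b) <= norm2 a + norm2 b.
Proof. by rewrite -(norm2N b); apply: norm2_tri. Qed.


Lemma in_supp w i : (i \in supp w) = (w i 0 != 0).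
Proof. by rewrite inE. Qed.

Lemma supp_subP (T : {set 'I_d}) w :
  reflect (forall i, i \notin T -> w i 0 = 0) (supp w \subset T).
Proof.
apply: (iffP subsetP) => h i.
  by move=> hi; apply/eqP; apply: contraNT hi => /negbTE hw; apply: h; rewrite in_supp hw.
by rewrite in_supp; apply: contraR => /h ->.
Qed.

Lemma restrictE (T : {set 'I_d}) w i : restrict T w i 0 = if i \in T then w i 0 else 0.
Proof. by rewrite mxE. Qed.

Lemma supp_restrict (T : {set 'I_d}) w : supp (restrict T w) \subset T.
Proof. by apply/supp_subP => i hi; rewrite restrictE (negbTE hi). Qed.

Lemma restrictB (T : {set 'I_d}) a b : restrict T (a - b) = restrict T a - restrict T b.
Proof.
apply/matrixP => i j; rewrite (ord1 j) !mxE; by case: (i \in T); rewrite ?subr0.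
Qed.

Lemma restrict_id (T : {set 'I_d}) w : supp w \subset T -> restrict T w = w.
Proof.
move/supp_subP => h; apply/matrixP => i j; rewrite (ord1 j) !mxE.
by case: ifP => // /negbT /h ->.
Qed.

Lemma dot_restrict (T : {set 'I_d}) w z :
  dot (restrict T w) z = \sum_(i in T) w i 0 * z i 0.
Proof.
rewrite /dot (bigID (mem T)) /= [X in _ + X]big1 ?addr0.
  by apply: eq_bigr => i hi; rewrite restrictE hi.
by move=> i /negbTE hi; rewrite restrictE hi mul0r.
Qed.

Lemma nsq_restrict (T : {set 'I_d}) w :
  nsq (restrict T w) = \sum_(i in T) w i 0 ^+ 2.
Proof.
rewrite -dotww dot_restrict; apply: eq_bigr => i hi; by rewrite restrictE hi expr2.
Qed.

Lemma dot_disj (A B : {set 'I_d}) a b : supp a \subset A -> supp b \subset B ->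
  [disjoint A & B] -> dot a b = 0.
Proof.
move=> /supp_subP ha /supp_subP hb dAB; apply: big1 => i _.
case: (boolP (i \in A)) => iA.
  have iB : i \notin B by rewrite (disjointFr dAB iA).
  by rewrite (hb _ iB) mulr0.
by rewrite (ha _ iA) mul0r.
Qed.

Lemma supp_add a b : supp (a + b) \subset supp a :|: supp b.
Proof.
apply/supp_subP => i; rewrite in_setU negb_or !in_supp !negbK => /andP[/eqP ha /eqP hb].
by rewrite mxE ha hb addr0.
Qed.

Lemma supp_opp a : supp (- a) = supp a.
Proof. by apply/setP => i; rewrite !in_supp mxE oppr_eq0. Qed.

Lemma supp_scale (c : R) a : supp (c *: a) \subset supp a.
Proof.
apply/supp_subP => i; rewrite in_supp negbK => /eqP h; by rewrite mxE h mulr0.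
Qed.

Lemma norm2_eq0 w : norm2 w = 0 -> w = 0.
Proof. by move=> h; apply: nsq0; rewrite -sqr_norm2 h expr0n. Qed.

End Basic.

Section Mat.
Variable R : realType.
Variables N d : nat.
Variable Phi : 'M[R]_(N, d).

Lemma dot_tr (y : 'cV[R]_N) (z : 'cV[R]_d) :
  dot (Phi^T *m y) z = dot y (Phi *m z).
Proof.
rewrite /dot.
under eq_bigr => i _ do rewrite !mxE big_distrl /=.
rewrite exchange_big /=; apply: eq_bigr => k _.
rewrite !mxE big_distrr /=; apply: eq_bigr => i _; rewrite !mxE; ring.
Qed.

Variable m : nat.
Variable eps : R.
Hypothesis ric : RIC Phi m eps.
Hypothesis eps0 : 0 <= eps.
Hypothesis eps1 : eps <= 1.

Lemma ric_up (w : 'cV[R]_d) : sparse m w -> nsq (Phi *m w) <= (1 + eps) ^+ 2 * nsq w.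
Proof.
move=> sw; have [_ h] := ric sw.
rewrite -!sqr_norm2; have := norm2_ge0 (Phi *m w); have := norm2_ge0 w; nra.
Qed.

Lemma ric_lo (w : 'cV[R]_d) : sparse m w -> (1 - eps) ^+ 2 * nsq w <= nsq (Phi *m w).
Proof.
move=> sw; have [h _] := ric sw.
have X0 : 0 <= (1 - eps) * norm2 w by apply: mulr_ge0; [rewrite subr_ge0 | exact: norm2_ge0].
rewrite -!sqr_norm2 -exprMn; apply: lerXn2r => //; by rewrite nnegrE ?norm2_ge0.
Qed.

Lemma sparse_sub (A : {set 'I_d}) (w : 'cV[R]_d) : supp w \subset A -> (#|A| <= m)%N -> sparse m w.
Proof. by move=> h hA; apply: leq_trans hA; apply: subset_leq_card. Qed.

Lemma polar0 (A B : {set 'I_d}) (a b : 'cV[R]_d) : supp a \subset A -> supp b \subset B ->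
  [disjoint A & B] -> (#|A :|: B| <= m)%N ->
  dot (Phi *m a) (Phi *m b) <= eps * (nsq a + nsq b).
Proof.
move=> ha hb dAB hm.
have dab : dot a b = 0 := dot_disj ha hb dAB.
have sp : forall c : 'cV[R]_d, supp c \subset supp a :|: supp b -> sparse m c.
  move=> c hc; apply: (sparse_sub hc); apply: leq_trans hm; apply: subset_leq_card.
  by apply: setUSS.
have s1 : sparse m (a + b) by apply: sp; apply: supp_add.
have s2 : sparse m (a - b).
  apply: sp; apply: subset_trans (supp_add _ _) _; by rewrite supp_opp.
have h1 := ric_up s1. have h2 := ric_lo s2.
rewrite mulmxDr nsqD in h1. rewrite mulmxBr nsqD nsqN in h2.
have e1 : dot (Phi *m a) (- (Phi *m b)) = - dot (Phi *m a) (Phi *m b).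
  by rewrite dotC dotNl dotC.
have e2 : dot a (- b) = 0 by rewrite dotC dotNl dotC dab oppr0.
rewrite nsqD dab in h1. rewrite nsqD nsqN e2 e1 in h2.
have := nsq_ge0 a; have := nsq_ge0 b; nra.
Qed.

Lemma polar (A B : {set 'I_d}) (a b : 'cV[R]_d) : supp a \subset A -> supp b \subset B ->
  [disjoint A & B] -> (#|A :|: B| <= m)%N ->
  dot (Phi *m a) (Phi *m b) <= 2 * eps * norm2 a * norm2 b.
Proof.
move=> ha hb dAB hm.
have [a0|na] := eqVneq (norm2 a) 0.
  by rewrite (norm2_eq0 a0) mulmx0 dot0l norm20 mulr0 mul0r.
have [b0|nb] := eqVneq (norm2 b) 0.
  by rewrite (norm2_eq0 b0) mulmx0 dot0r norm20 mulr0.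
have pa : 0 < norm2 a by rewrite lt_def na norm2_ge0.
have pb : 0 < norm2 b by rewrite lt_def nb norm2_ge0.
set l := Num.sqrt (norm2 b / norm2 a).
have lp : 0 < l by rewrite sqrtr_gt0 divr_gt0.
have l2 : l ^+ 2 = norm2 b / norm2 a by rewrite sqr_sqrtr // ltW // divr_gt0.
have := polar0 (subset_trans (supp_scale l a) ha) (subset_trans (supp_scale l^-1 b) hb) dAB hm.
rewrite -!scalemxAr dotZl dotZr -!dotww !dotZl !dotZr !dotww -!sqr_norm2.
have lV : l * l^-1 = 1 by rewrite mulfV // gt_eqF.
rewrite mulrA lV mul1r => h; apply: le_trans h _.
have -> : l * (l * norm2 a ^+ 2) = l ^+ 2 * norm2 a ^+ 2 by rewrite mulrA expr2.
have -> : l^-1 * (l^-1 * norm2 b ^+ 2) = norm2 b ^+ 2 / l ^+ 2 by rewrite mulrA -invrM ?unitfE ?gt_eqF // -expr2 mulrC.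
rewrite l2.
have -> : norm2 b / norm2 a * norm2 a ^+ 2 + norm2 b ^+ 2 / (norm2 b / norm2 a)
   = 2 * norm2 a * norm2 b by field; rewrite !gt_eqF.
by rewrite !mulrA (mulrC eps 2).
Qed.

Lemma tr_bound (T : {set 'I_d}) (y : 'cV[R]_N) : (#|T| <= m)%N ->
  norm2 (restrict T (Phi^T *m y)) <= (1 + eps) * norm2 y.
Proof.
move=> hT; set z := restrict T (Phi^T *m y).
have e : nsq z = dot y (Phi *m z).
  rewrite -dot_tr dotC dot_restrict nsq_restrict; apply: eq_bigr => i _; by rewrite expr2.
have h1 := CS y (Phi *m z).
have [_ h2] := ric (sparse_sub (supp_restrict T (Phi^T *m y)) hT).
rewrite -sqr_norm2 in e.
have := norm2_ge0 y; have := norm2_ge0 z; have := norm2_ge0 (Phi *m z).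
have [z0|nz] := eqVneq (norm2 z) 0.
  move=> *; rewrite z0; apply: mulr_ge0; [by rewrite addr_ge0| exact: norm2_ge0].
move=> g1 g2 g3.
have pz : 0 < norm2 z by rewrite lt_def nz g2.
have : norm2 z * norm2 z <= norm2 z * ((1 + eps) * norm2 y).
  rewrite -expr2 e; apply: le_trans h1 _; nra.
by rewrite ler_pM2l.
Qed.

End Mat.

Section Romp.
Variable R : realType.
Variables N d n : nat.
Variable Phi : 'M[R]_(N, d).
Variable v : 'cV[R]_d.

Definition good (I : {set 'I_d}) (r : 'cV[R]_N) : Prop :=
  exists y : 'cV[R]_d, supp y \subset I /\ r = Phi *m v - Phi *m y /\
    forall z : 'cV[R]_d, supp z \subset I -> dot r (Phi *m z) = 0.

Lemma nsq_le (N' : nat) (a b : 'cV[R]_N') : norm2 a <= norm2 b -> nsq a <= nsq b.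
Proof.
move=> h; rewrite -!sqr_norm2; apply: lerXn2r => //; by rewrite nnegrE norm2_ge0.
Qed.

Lemma good_init : good set0 (Phi *m v).
Proof.
exists 0; split; first by apply/supp_subP => i _; rewrite mxE.
split; first by rewrite mulmx0 subr0.
move=> z /supp_subP hz.
have -> : z = 0 by apply/matrixP => i j; rewrite (ord1 j) mxE hz ?inE.
by rewrite mulmx0 dot0r.
Qed.

Lemma residual_good I r : is_residual Phi (Phi *m v) I r -> good I r.
Proof.
move=> [y [hy [hmin ->]]]; exists y; split=> //; split=> // z hz.
set r0 := Phi *m v - Phi *m y.
set c := dot r0 (Phi *m z); set q := nsq (Phi *m z).
have q0 : 0 <= q := nsq_ge0 _.
set t := c / (q + 1).
have qp1 : 0 < q + 1 by lra.
have ht : t * (q + 1) = c by rewrite /t mulfVK // gt_eqF.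
have hs : supp (y + t *: z) \subset I.
  apply: subset_trans (supp_add _ _) _; rewrite subUset hy /=.
  exact: subset_trans (supp_scale _ _) hz.
have := nsq_le (hmin _ hs).
have -> : Phi *m v - Phi *m (y + t *: z) = r0 - t *: (Phi *m z).
  by rewrite mulmxDr -scalemxAr /r0 opprD addrA.
rewrite -/r0; clearbody r0.
rewrite -!dotww !(dotBl, dotBr, dotZl, dotZr) (dotC (Phi *m z) r0) !dotww -/c -/q.
move=> h.
clearbody t c q. subst c.
have t0 : t = 0.
  have : t ^+ 2 * (q + 2) <= 0 by nra.
  move=> h2; have h3 : t ^+ 2 <= 0 by nra.
  by apply/eqP; rewrite -sqrf_eq0 eq_le h3 sqr_ge0.
by rewrite t0 mul0r.
Qed.

Lemma dot_delta (w : 'cV[R]_d) (i : 'I_d) : dot w (\col_j ((j == i)%:R)) = w i 0.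
Proof.
rewrite /dot (bigD1 i) //= big1 ?addr0 => [|j /negbTE hj]; by rewrite mxE ?eqxx ?mulr1 ?hj ?mulr0.
Qed.

Lemma good_u0 I r i : good I r -> i \in I -> (Phi^T *m r) i 0 = 0.
Proof.
move=> [y [_ [_ ho]]] hi.
have hs : supp (\col_j ((j == i)%:R) : 'cV[R]_d) \subset I.
  apply/supp_subP => j hj; rewrite mxE; case: eqP => // e; by rewrite e hi in hj.
by rewrite -(dot_delta (Phi^T *m r) i) dot_tr ho.
Qed.

Definition Inv (I : {set 'I_d}) := (#|I :\: supp v| <= #|I :&: supp v|)%N.

Hypothesis sv : sparse n v.

Lemma Inv_card I : Inv I -> (#|I :|: supp v| <= 2 * n)%N.
Proof.
rewrite /Inv => h; move: sv; rewrite /sparse => hs.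
have e1 := cardsUI I (supp v). have e2 := cardsID (supp v) I.
have e3 : (#|I :&: supp v| <= #|supp v|)%N by apply: subset_leq_card; apply: subsetIr.
rewrite mul2n -addnn; lia.
Qed.

Variable eps : R.
Hypothesis ric : RIC Phi (2 * n) eps.
Hypothesis eps0 : 0 <= eps.
Hypothesis eps1 : eps <= 1 / 11.

Lemma l35 I r (T : {set 'I_d}) : good I r -> Inv I -> (#|T| <= 2 * n)%N ->
  norm2 (restrict T (Phi^T *m (Phi *m (restrict (supp v :\: I) v)) - Phi^T *m r))
   <= (12 / 5) * eps * norm2 (restrict (supp v :\: I) v).
Proof.
move=> [y [hy [er ho]]] hI hT; have e0 : eps >= 0 := eps0; have e11 : eps <= 1 / 11 := eps1; set v0 := restrict (supp v :\: I) v.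
set S := supp v :\: I.
set a := y - (v - v0).
have ha : supp a \subset I.
  apply/supp_subP => i hi; rewrite !mxE.
  move/supp_subP: hy => /(_ i hi) ->.
  case: ifP => iS; first by rewrite subrr oppr0 add0r.
  have : v i 0 = 0.
    apply/eqP; apply: contraFT iS => hv; by rewrite !inE hi /= hv.
  by move=> ->; rewrite subr0 oppr0 add0r.
have er2 : r = Phi *m v0 - Phi *m a.
  by rewrite er /a !mulmxBr opprB addrA [Phi *m v0 + _]addrC subrK.
have eu : Phi^T *m (Phi *m v0) - Phi^T *m r = Phi^T *m (Phi *m a).
  by rewrite er2 mulmxBr opprB addrC subrK.
rewrite eu.
have hIc := Inv_card hI.
have e1 : eps <= 1 by apply: le_trans eps1 _; lra.

have h1 := tr_bound ric eps0 (Phi *m a) hT.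
have hS : supp v0 \subset S by apply: supp_restrict.
have dIS : [disjoint I & S].
  by rewrite -setI_eq0 /S setIDA setIC -setIDA setDv setI0.
have cIS : (#|I :|: S| <= 2 * n)%N.
  apply: leq_trans hIc; apply: subset_leq_card; apply: setUS; exact: subsetDl.
have hp := polar ric e1 ha hS dIS cIS.
have orth : dot (Phi *m a) (Phi *m v0) = nsq (Phi *m a).
  have := ho _ ha; rewrite er2 dotBl -dotww (dotC (Phi *m v0)) => /eqP.
  by rewrite subr_eq0 => /eqP ->.
have sa : sparse (2 * n) a.
  apply: (sparse_sub ha); apply: leq_trans hIc; apply: subset_leq_card; exact: subsetUl.
have [hlo _] := ric sa.
rewrite orth -sqr_norm2 in hp.
set p := norm2 (Phi *m a) in h1 hp hlo *.
set s := norm2 v0 in hp *. set na := norm2 a in hp hlo.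
have p0 : 0 <= p := norm2_ge0 _. have s0 : 0 <= s := norm2_ge0 _.
have na0 : 0 <= na := norm2_ge0 _.
have hp2 : (1 - eps) * p <= 2 * eps * s.
  have [pz|pnz] := eqVneq p 0.
    rewrite pz mulr0; apply: mulr_ge0 => //; apply: mulr_ge0 => //; lra.
  have pp : 0 < p by rewrite lt_def pnz p0.
  have : p * ((1 - eps) * p) <= p * (2 * eps * s).
    have e1p : 0 <= 1 - eps by lra.
    have es : 0 <= 2 * eps * s by rewrite !mulr_ge0.
    have st1 : (1 - eps) * p ^+ 2 <= (1 - eps) * (2 * eps * na * s) by apply: ler_wpM2l.
    have st2 : (1 - eps) * na * (2 * eps * s) <= p * (2 * eps * s) by apply: ler_wpM2r.
    nra.
  by rewrite ler_pM2l.
apply: le_trans h1 _.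
have hq : (1 + eps) * (1 - eps) * p <= (1 + eps) * (2 * eps * s).
  rewrite -mulrA; apply: ler_wpM2l => //; lra.
have hr : (1 + eps) * (2 * eps * s) <= 12 / 5 * eps * s * (1 - eps).
  have : 0 <= eps * s * (2 / 5 - 22 / 5 * eps) by apply: mulr_ge0; [apply: mulr_ge0 => // | lra].
  move=> hh; nra.
have hpos : 0 < 1 - eps by lra.
rewrite -(ler_pM2r hpos); nra.
Qed.

End Romp.

Section Reg.
Variable R : realType.
Variable d : nat.
Variable u : 'cV[R]_d.

Definition E (T : {set 'I_d}) : R := \sum_(i in T) u i 0 ^+ 2.

Lemma sqr_abs (x : R) : x ^+ 2 = `|x| ^+ 2.
Proof. by rewrite real_normK ?num_real. Qed.

Lemma E_ge0 T : 0 <= E T.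
Proof. by apply: sumr_ge0 => i _; rewrite sqr_ge0. Qed.

Lemma E_split (T A : {set 'I_d}) : E T = E (T :&: A) + E (T :\: A).
Proof.
rewrite /E (bigID (mem A)) /=; congr (_ + _); apply: eq_bigl => i;
  by rewrite !inE andbC.
Qed.

Lemma E_sub (A B : {set 'I_d}) : A \subset B -> E A <= E B.
Proof.
move=> h; rewrite (E_split B A) (setIidPr h) lerDl; exact: E_ge0.
Qed.

Lemma sq_le (x y : R) : `|x| <= `|y| -> x ^+ 2 <= y ^+ 2.
Proof.
move=> h; rewrite (sqr_abs x) (sqr_abs y); apply: lerXn2r => //; by rewrite nnegrE.
Qed.

Lemma dbl (A B : {set 'I_d}) (c : R) : (forall i j, i \in A -> j \in B -> u i 0 ^+ 2 <= c * u j 0 ^+ 2) ->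
  #|B|%:R * E A <= #|A|%:R * (c * E B).
Proof.
move=> h.
have e1 : #|B|%:R * E A = \sum_(i in A) \sum_(j in B) u i 0 ^+ 2.
  rewrite /E mulr_sumr; apply: eq_bigr => i _; by rewrite sumr_const mulr_natl.
have e2 : #|A|%:R * (c * E B) = \sum_(i in A) \sum_(j in B) c * u j 0 ^+ 2.
  rewrite /E -mulr_sumr sumr_const mulr_natl; congr (_ *+ _).
rewrite e1 e2; apply: ler_sum => i hi; apply: ler_sum => j hj; exact: h.
Qed.

Lemma identify_bound n (J S : {set 'I_d}) : identify n u J -> (#|S| <= n)%N -> E S <= E J.
Proof.
rewrite /identify; case: ifP => hs.
  move=> -> _; rewrite (E_split S (supp u)) [X in _ + X]big1 ?addr0.
    by apply: E_sub; apply: subsetIr.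
  by move=> i; rewrite !inE negbK => /andP[/eqP -> _]; rewrite expr0n.
move=> [cJ hJ] cS.
rewrite (E_split S J) (E_split J S) setIC lerD2l.
have hc : (#|S :\: J| <= #|J :\: S|)%N.
  have := cardsID J S; have := cardsID S J; rewrite setIC; lia.
have := @dbl (S :\: J) (J :\: S) 1.
rewrite mul1r => hd.
have: #|J :\: S|%:R * E (S :\: J) <= #|S :\: J|%:R * E (J :\: S).
  apply: hd => i j; rewrite !inE => /andP[hiJ hiS] /andP[hjS hjJ].
  by rewrite mul1r; apply: sq_le; apply: hJ.
have [z|nz] := eqVneq #|J :\: S| 0%N.
  move=> _; have : #|S :\: J| = 0%N by lia.
  by move/eqP; rewrite cards_eq0 => /eqP ->; rewrite /E big_set0 E_ge0.
move=> h2.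
have hp : 0 < (#|J :\: S|)%:R :> R by rewrite ltr0n lt0n.
rewrite -(ler_pM2l hp); apply: le_trans h2 _; apply: ler_wpM2r; first exact: E_ge0.
by rewrite ler_nat.
Qed.


Lemma class_find (M t : R) (K : nat) : M / 2 ^+ K < t -> t <= M ->
  exists k, (k < K)%N /\ M / 2 ^+ k.+1 < t /\ t <= M / 2 ^+ k.
Proof.
elim: K => [|K IH] h1 h2.
  by move: h1; rewrite expr0 divr1 => h1; exfalso; move: (lt_le_trans h1 h2); rewrite ltxx.
have [le|lt] := leP t (M / 2 ^+ K).
  by exists K; split=> //; split.
have [k [hk hk2]] := IH lt h2.
by exists k; split=> //; apply: ltn_trans hk _.
Qed.

Lemma E1 i : E [set i] = u i 0 ^+ 2.
Proof. by rewrite /E big_set1. Qed.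

Lemma E_norm T : E T = nsq (restrict T u).
Proof. by rewrite nsq_restrict. Qed.

Lemma reg_bound n (J J0 : {set 'I_d}) K : (#|J| <= n)%N -> regularize u J J0 ->
  (2 * n <= 4 ^ K)%N -> E J <= 2 * K%:R * E J0.
Proof.
move=> cJ [sJ0 [cmp0 hmax]] hK.
have EJ0 := E_ge0 J0.
have [->|[i0 hi0]] := set_0Vmem J.
  rewrite /E big_set0; apply: mulr_ge0 => //; apply: mulr_ge0 => //.
case: (Order.TotalTheory.arg_maxP (fun i => `|u i 0|) hi0) => im him hM.
set M := `|u im 0|.
have M0 : 0 <= M by rewrite normr_ge0.
set A := fun k : nat => [set j in J | (M / 2 ^+ k.+1 < `|u j 0|) && (`|u j 0| <= M / 2 ^+ k)].
have EA : forall k, E (A k) <= E J0.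
  move=> k; rewrite !E_norm; apply: nsq_le; apply: hmax.
    by apply/subsetP => j; rewrite inE => /andP[].
  move=> i j; rewrite !inE => /andP[_ /andP[_ hi]] /andP[_ /andP[hj _]].
  apply: le_trans hi _.
  have e : M / 2 ^+ k = 2 * (M / 2 ^+ k.+1).
    by rewrite exprS; field; apply: expf_neq0; rewrite pnatr_eq0.
  by rewrite e ler_pM2l // ltW.
set D := (2 : R) ^+ K.
have Dp : 0 < D by rewrite exprn_gt0.
have pw : forall i, i \in J ->
    u i 0 ^+ 2 <= M ^+ 2 / D ^+ 2 + \sum_(k < K) (if i \in A k then u i 0 ^+ 2 else 0).
  move=> i hi.
  have s0 : 0 <= \sum_(k < K) (if i \in A k then u i 0 ^+ 2 else 0).
    by apply: sumr_ge0 => k _; case: ifP => // _; rewrite sqr_ge0.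
  have [sm|bg] := leP `|u i 0| (M / D).
    have : u i 0 ^+ 2 <= (M / D) ^+ 2.
      rewrite (sqr_abs (u i 0)); apply: lerXn2r => //; rewrite nnegrE ?normr_ge0 //.
      by rewrite divr_ge0 // ltW.
    rewrite expr_div_n => h; apply: le_trans h _; by rewrite lerDl.
  have [k [hk [k1 k2]]] := class_find bg (hM i hi).
  rewrite (bigD1 (Ordinal hk)) //= ifT; last by rewrite !inE hi k1 k2.
  rewrite addrCA lerDl; apply: addr_ge0; first by rewrite divr_ge0 ?sqr_ge0 // sqr_ge0.
  by apply: sumr_ge0 => j _; case: ifP => // _; rewrite sqr_ge0.
have S1 : E J <= #|J|%:R * (M ^+ 2 / D ^+ 2) + K%:R * E J0.
  apply: le_trans (ler_sum _ pw) _.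
  rewrite big_split /= sumr_const mulr_natl lerD2l.
  rewrite exchange_big /=.
  have -> : K%:R * E J0 = \sum_(k < K) E J0 by rewrite sumr_const card_ord mulr_natl.
  apply: ler_sum => k _.
  rewrite -big_mkcondr /=; apply: le_trans (EA k); rewrite le_eqVlt; apply/orP; left; apply/eqP; apply: eq_bigl => j.
  rewrite /A !inE; case: (j \in J) => //=.
have MJ : M ^+ 2 <= E J.
  rewrite /M -sqr_abs -E1; apply: E_sub; by rewrite sub1set.
have hD : 2 * n%:R <= D ^+ 2.
  rewrite /D -exprM mulnC exprM.
  have -> : (2 : R) ^+ 2 = 4%:R by rewrite expr2 -natrM.
  by rewrite -natrX -natrM ler_nat.
have cJr : #|J|%:R <= n%:R :> R by rewrite ler_nat.
have D2p : 0 < D ^+ 2 by rewrite exprn_gt0.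
have S2 : #|J|%:R * (M ^+ 2 / D ^+ 2) <= M ^+ 2 / 2.
  have : #|J|%:R * (M ^+ 2 / D ^+ 2) * D ^+ 2 <= M ^+ 2 / 2 * D ^+ 2.
    rewrite -mulrA divfK ?gt_eqF //.
    have M2 : 0 <= M ^+ 2 by rewrite sqr_ge0.
    have c0 : 0 <= #|J|%:R :> R by rewrite ler0n.
    nra.
  by rewrite ler_pM2r.
have : E J <= E J / 2 + K%:R * E J0 by lra.
move=> h; lra.
Qed.

Lemma cmp_frac (J0 S : {set 'I_d}) : Defs.comparable u J0 ->
  (2 * #|J0 :&: S| < #|J0|)%N -> E J0 <= 5 * E (J0 :\: S).
Proof.
move=> cmp hc.
have := cardsID S J0 => ec.
have hd := @dbl (J0 :&: S) (J0 :\: S) 4.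
have : #|J0 :\: S|%:R * E (J0 :&: S) <= #|J0 :&: S|%:R * (4 * E (J0 :\: S)).
  apply: hd => i j; rewrite !inE => /andP[hi _] /andP[_ hj].
  have := cmp i j hi hj => h.
  rewrite (sqr_abs (u i 0)) (sqr_abs (u j 0)).
  have : `|u i 0| ^+ 2 <= (2 * `|u j 0|) ^+ 2.
    apply: lerXn2r => //; rewrite nnegrE ?normr_ge0 //; by rewrite mulr_ge0 ?normr_ge0.
  by rewrite exprMn; have -> : (2:R) ^+ 2 = 4 by rewrite expr2; lra.
move=> h.
have lt : (#|J0 :&: S| < #|J0 :\: S|)%N by lia.
have bp : 0 < #|J0 :\: S|%:R :> R by rewrite ltr0n; lia.
have ab : #|J0 :&: S|%:R <= #|J0 :\: S|%:R :> R by rewrite ler_nat; lia.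
have Y0 := E_ge0 (J0 :\: S).
have X : E (J0 :&: S) <= 4 * E (J0 :\: S).
  rewrite -(ler_pM2l bp); apply: le_trans h _; apply: ler_wpM2r => //.
  by apply: mulr_ge0 => //; lra.
rewrite (E_split J0 S); lra.
Qed.

Lemma cmp_zero (J0 : {set 'I_d}) i : Defs.comparable u J0 -> i \in J0 -> u i 0 = 0 -> E J0 = 0.
Proof.
move=> cmp hi h0; apply: big1 => j hj.
have := cmp j i hj hi; rewrite h0 normr0 mulr0 => h.
have : `|u j 0| = 0 by apply/eqP; rewrite eq_le h normr_ge0.
by move/eqP; rewrite normr_eq0 => /eqP ->; rewrite expr0n.
Qed.

End Reg.

Lemma dot_restrict2 (R : realType) d (T : {set 'I_d}) (w z : 'cV[R]_d) :
  dot (restrict T w) z = dot w (restrict T z).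
Proof. by rewrite dot_restrict dotC dot_restrict; apply: eq_bigr => i _; rewrite mulrC. Qed.

Lemma card_union_le (T : finType) (A B : {set T}) : (#|A :|: B| <= #|A| + #|B|)%N.
Proof. by rewrite cardsU leq_subr. Qed.

Lemma sq_mono (R : realType) (x y : R) : 0 <= x -> x <= y -> x ^+ 2 <= y ^+ 2.
Proof. move=> x0 xy; apply: lerXn2r => //; rewrite nnegrE //; exact: le_trans xy. Qed.

Lemma le2n n : (n <= 2 * n)%N. Proof. lia. Qed.
Lemma nat_h1 a b c : a + b = c -> (a < b)%N -> (2 * a < c)%N. Proof. lia. Qed.
Lemma nat_h2 a b n : (a <= n)%N -> (b <= n)%N -> (a + b <= 2 * n)%N. Proof. lia. Qed.
Lemma nat_h3 x1 x2 y1 y2 y2' x2' U : (x1 <= y1)%N -> (x2 <= x2')%N -> (x2' <= y2')%N ->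
  (y2' <= y2)%N -> (U <= x1 + x2)%N -> (U <= y1 + y2 - 0)%N.
Proof. lia. Qed.

Section Main.
Variable R : realType.
Variables N d n : nat.
Variable Phi : 'M[R]_(N, d).
Variable v : 'cV[R]_d.
Variable eps : R.
Hypothesis sv : sparse n v.
Hypothesis ric : RIC Phi (2 * n) eps.
Hypothesis eps0 : 0 <= eps.
Hypothesis epsS : eps <= 1 / 25.
Hypothesis hK : exists K : nat, (2 * n <= 4 ^ K)%N /\ 10 * K%:R * (22 / 5 * eps) ^+ 2 < (4 / 5) ^+ 2.

Lemma good_decomp I r : good Phi v I r ->
  exists a, supp a \subset I /\ r = Phi *m restrict (supp v :\: I) v - Phi *m a /\
    forall z : 'cV[R]_d, supp z \subset I -> dot r (Phi *m z) = 0.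
Proof.
move=> [y [hy [er ho]]]; set v0 := restrict (supp v :\: I) v.
exists (y - (v - v0)); split; last split => //.
  apply/supp_subP => i hi; rewrite !mxE.
  move/supp_subP: hy => /(_ i hi) ->.
  case: ifP => iS; first by rewrite subrr oppr0 add0r.
  have : v i 0 = 0.
    apply/eqP; apply: contraFT iS => hv; by rewrite !inE hi /= hv.
  by move=> ->; rewrite subr0 oppr0 add0r.
by rewrite er !mulmxBr opprB addrA [Phi *m v0 + _]addrC subrK.
Qed.

Lemma v0_pos I r : good Phi v I r -> r != 0 -> 0 < norm2 (restrict (supp v :\: I) v).
Proof.
move=> g rn; have [a [ha [er ho]]] := good_decomp g.
rewrite lt_def norm2_ge0 andbT; apply/eqP => h0.
have v00 := norm2_eq0 h0.
rewrite v00 mulmx0 sub0r in er.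
have : nsq r = 0.
  by rewrite -dotww {2}er dotC dotNl dotC ho // oppr0.
by move/nsq0 => r0; rewrite r0 eqxx in rn.
Qed.

Lemma step_inv I r J J0 : good Phi v I r -> Inv v I -> r != 0 ->
  identify n (Phi^T *m r) J -> regularize (Phi^T *m r) J J0 -> Inv v (I :|: J0).
Proof.
move=> g hI rn hid hreg.
have e0 : eps >= 0 := eps0. have e25 : eps <= 1 / 25 := epsS.
have e11 : eps <= 1 / 11 by lra.
have e1 : eps <= 1 by lra.
have [K [hK1 hK2]] := hK.
set u := Phi^T *m r.
set S := supp v :\: I.
set v0 := restrict S v.
set u0 := Phi^T *m (Phi *m v0).
have sp := v0_pos g rn. rewrite -/S -/v0 in sp.
set s := norm2 v0 in sp.
have [a [ha [er ho]]] := good_decomp g.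
have cS : (#|S| <= n)%N by apply: leq_trans sv; apply: subset_leq_card; apply: subsetDl.
have cJ : (#|J| <= n)%N.
  move: hid; rewrite /identify; case: ifP => h; [by move=> -> | by move=> [-> _]].
have sJ0 : J0 \subset J by case: hreg.
have cmp : Defs.comparable u J0 by case: hreg => _ [].
have hv0S : supp v0 \subset S by apply: supp_restrict.
have hu0S : (1 - eps) ^+ 2 * s <= norm2 (restrict S u0).
  have sv0 : sparse (2 * n) v0.
    apply: (sparse_sub hv0S); exact: leq_trans cS (le2n n).
  have lo := ric_lo ric e1 sv0.
  have e : dot (restrict S u0) v0 = nsq (Phi *m v0).
    by rewrite dot_restrict2 (restrict_id hv0S) dot_tr dotww.
  have cs := CS (restrict S u0) v0.
  rewrite e -!sqr_norm2 -/s in lo cs.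
  have := norm2_ge0 (restrict S u0) => n0.
  have : s * ((1 - eps) ^+ 2 * s) <= s * norm2 (restrict S u0).
    rewrite mulrCA -expr2; apply: le_trans lo _; apply: le_trans cs _; by rewrite mulrC.
  by rewrite ler_pM2l.
have c2S : (#|S| <= 2 * n)%N := leq_trans cS (le2n n).
have l35S := l35 sv ric eps0 e11 g hI c2S.
rewrite -/S -/v0 -/u0 -/u -/s in l35S.
have huS : ((1 - eps) ^+ 2 - 12 / 5 * eps) * s <= norm2 (restrict S u).
  have e : restrict S u0 = restrict S u + restrict S (u0 - u).
    by rewrite restrictB addrC subrK.
  have := norm2_tri (restrict S u) (restrict S (u0 - u)); rewrite -e => t.
  lra.
have c1 : 4 / 5 <= (1 - eps) ^+ 2 - 12 / 5 * eps.
  have q := sqr_ge0 eps.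
  have -> : (1 - eps) ^+ 2 = 1 - 2 * eps + eps ^+ 2 by rewrite !expr2; ring.
  lra.
have ES : (4 / 5 * s) ^+ 2 <= E u S.
  rewrite E_norm -sqr_norm2; apply: sq_mono.
    by apply: mulr_ge0; [lra | exact: ltW].
  apply: le_trans huS; apply: ler_wpM2r => //; exact: ltW.
have EJ : E u S <= E u J := identify_bound hid cS.
have EJ0 : E u J <= 2 * K%:R * E u J0 := reg_bound cJ hreg hK1.
have K0 : 0 <= K%:R :> R by rewrite ler0n.
have dJ0 : [disjoint I & J0].
  apply/pred0P => i /=; apply/negP => /andP[iI iJ0].
  have := cmp_zero cmp iJ0 (good_u0 g iI) => h.
  rewrite h mulr0 in EJ0.
  have : (4 / 5 * s) ^+ 2 <= 0 by apply: le_trans ES (le_trans EJ EJ0).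
  have : 0 < (4 / 5 * s) ^+ 2 by apply: exprn_gt0; apply: mulr_gt0 => //; lra.
  by move=> h1 h2; have := lt_le_trans h1 h2; rewrite ltxx.
have claim : (#|J0 :\: S| <= #|J0 :&: S|)%N.
  rewrite leqNgt; apply/negP => hlt.
  have hc : (2 * #|J0 :&: S| < #|J0|)%N := nat_h1 (cardsID S J0) hlt.
  have hf := cmp_frac cmp hc.
  set L := J0 :\: S in hf.
  have cL : (#|L| <= n)%N.
    apply: leq_trans cJ; apply: subset_leq_card; apply: subset_trans sJ0; exact: subsetDl.
  have c2L : (#|L| <= 2 * n)%N := leq_trans cL (le2n n).
  have l35L := l35 sv ric eps0 e11 g hI c2L.
  rewrite -/S -/v0 -/u0 -/u -/s in l35L.
  have hu0L : norm2 (restrict L u0) <= 2 * eps * s.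
    set z := restrict L u0.
    have dLS : [disjoint L & S].
      by rewrite -setI_eq0 /L setDE -setIA [~: S :&: S]setIC setICr setI0.
    have cLS : (#|L :|: S| <= 2 * n)%N.
      apply: leq_trans (card_union_le _ _) _; exact: nat_h2.
    have hp := polar ric e1 (supp_restrict L u0) hv0S dLS cLS.
    have e : nsq z = dot (Phi *m z) (Phi *m v0).
      rewrite -dotww {1}/z dot_restrict2 /z (restrict_id (supp_restrict L u0)).
      by rewrite /u0 dot_tr dotC.
    rewrite -e -sqr_norm2 in hp.
    have := norm2_ge0 z => z0.
    have [zz|nz] := eqVneq (norm2 z) 0.
      by rewrite zz; apply: mulr_ge0; [apply: mulr_ge0; lra | exact: ltW].
    have zp : 0 < norm2 z by rewrite lt_def nz z0.
    have : norm2 z * norm2 z <= norm2 z * (2 * eps * s).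
      rewrite -expr2; apply: le_trans hp _; by rewrite !mulrA [_ * norm2 z]mulrC !mulrA.
    by rewrite ler_pM2l.
  have huL : norm2 (restrict L u) <= 22 / 5 * eps * s.
    have e : restrict L u = restrict L u0 - restrict L (u0 - u).
      by rewrite restrictB opprB addrC subrK.
    rewrite e; apply: le_trans (norm2_triB _ _) _; lra.
  have EL : E u L <= (22 / 5 * eps * s) ^+ 2.
    rewrite E_norm -sqr_norm2; apply: sq_mono; first exact: norm2_ge0.
    exact: huL.
  have : (4 / 5 * s) ^+ 2 <= 10 * K%:R * (22 / 5 * eps * s) ^+ 2.
    apply: le_trans ES _; apply: le_trans EJ _; apply: le_trans EJ0 _.
    have h1 : 2 * K%:R * E u J0 <= 2 * K%:R * (5 * E u L).
      by apply: ler_wpM2l => //; lra.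
    apply: le_trans h1 _.
    have h2 : 2 * K%:R * 5 * E u L <= 2 * K%:R * 5 * (22 / 5 * eps * s) ^+ 2.
      by apply: ler_wpM2l => //; lra.
    rewrite mulrA; apply: le_trans h2 _; lra.
  rewrite !exprMn => h.
  have s2 : 0 < s ^+ 2 by rewrite exprn_gt0.
  have : (4 / 5) ^+ 2 <= 10 * K%:R * (22 / 5 * eps) ^+ 2.
    rewrite exprMn; rewrite -(ler_pM2r s2); lra.
  by rewrite leNgt hK2.
rewrite /Inv in hI *.
have a1 : (#|J0 :\: supp v| <= #|J0 :\: S|)%N by apply: subset_leq_card; apply: setDS; apply: subsetDl.
have a2 : (#|J0 :&: S| <= #|J0 :&: supp v|)%N by apply: subset_leq_card; apply: setIS; apply: subsetDl.
rewrite setDUl setIUl.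
have dd : (I :&: supp v) :&: (J0 :&: supp v) = set0.
  apply/setP => i; rewrite !inE.
  case: (boolP (i \in I)) => iI; case: (boolP (i \in J0)) => iJ;
    rewrite ?andbF ?andFb ?andbT //=.
  by move: dJ0 => /pred0P /(_ i) /=; rewrite iI iJ.
rewrite (cardsU (I :&: supp v)) dd cards0.
exact: nat_h3 hI a1 claim a2 (card_union_le (I :\: supp v) (J0 :\: supp v)).
Qed.

End Main.

Unset Implicit Arguments. Set Strict Implicit.

Lemma nat_h4 X n : (1 < n)%N -> (X < 2 * n)%N -> (4 * X <= n ^ 4)%N.
Proof.
move=> h1 h2; rewrite !expnS expn0 muln1.
have b : (2 * 2 <= n * n)%N by apply: leq_mul.
have c : (2 * 2 * 2 <= n * n * n)%N by apply: leq_mul.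
have e : (2 * 2 * 2 * n <= n * n * n * n)%N by apply: leq_mul.
rewrite !mulnA; lia.
Qed.

Lemma ln2_ge (R : realType) : 7 / 12 <= ln (2 : R).
Proof.
have h1 : ln (1 + (-1/3) : R) <= -1/3 by apply: le_ln1Dx; lra.
have h2 : ln (1 + (-1/4) : R) <= -1/4 by apply: le_ln1Dx; lra.
have p1 : (1 + (-1/3) : R) \in Num.pos by rewrite posrE; lra.
have p2 : (1 + (-1/4) : R) \in Num.pos by rewrite posrE; lra.
have p3 : (2 : R) \in Num.pos by rewrite posrE; lra.
have e : (2 : R)^-1 = (1 + (-1/3)) * (1 + (-1/4)) by field.
have := lnV p3; rewrite e lnM // => h.
lra.
Qed.

Lemma ln_pow_bound (R : realType) (x : R) (K : nat) : 0 < x -> (4 : R) ^+ K <= x ^+ 4 ->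
  K%:R * (7 / 6) <= 4 * ln x.
Proof.
move=> xp hr.
have p4 : (4 : R) ^+ K \in Num.pos by rewrite posrE exprn_gt0 //; lra.
have pn : x ^+ 4 \in Num.pos by rewrite posrE exprn_gt0.
have e4 : ln (4 : R) = ln 2 *+ 2.
  rewrite -(lnXn 2 (_ : (0:R) < 2)) //; congr ln; rewrite expr2; lra.
have four : (0:R) < 4 by lra.
move: hr; rewrite -(ler_ln p4 pn) (lnXn K four).
rewrite (lnXn 4 xp) e4 => hr.
have hr2 : K%:R * (2 * ln (2:R)) <= 4 * ln x by rewrite !mulr_natl.
have h2 : 7 / 12 <= ln (2:R) := ln2_ge R.
have K0r : 0 <= K%:R :> R by rewrite ler0n.
have h3 : K%:R * (7 / 6) <= K%:R * (2 * ln (2:R)).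
  apply: ler_wpM2l => //; lra.
lra.
Qed.

Lemma K_bound (R : realType) n : (1 < n)%N ->
  exists K : nat, (2 * n <= 4 ^ K)%N /\ K%:R * (7 / 6) <= 4 * ln (n%:R : R).
Proof.
move=> hn; exists (up_log 4 (2 * n)); set K := up_log 4 (2 * n).
split; first exact: up_logP.
have K0 : (0 < K)%N by rewrite up_log_gt0; apply/andP; split => //; lia.
have hg : (4 ^ K.-1 < 2 * n)%N by apply: up_log_gtn => //; lia.
have hn4 : (4 ^ K <= n ^ 4)%N.
  by rewrite -(prednK K0) expnS; apply: nat_h4.
apply: ln_pow_bound; first by rewrite ltr0n; lia.
by rewrite -natrX -natrX ler_nat.
Qed.

Section Fin.
Variable R : realType.
Variables N d n : nat.
Variable Phi : 'M[R]_(N, d).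
Variable v : 'cV[R]_d.

Lemma state_good I r : romp_state Phi (Phi *m v) n I r -> good Phi v I r.
Proof.
elim => [|{}I {}r I' r' _ g [_ [J [J0 [_ [_ [_ hres]]]]]]]; first exact: good_init.
exact: residual_good hres.
Qed.

Lemma state_inv (eps : R) I r : sparse n v -> RIC Phi (2 * n) eps -> 0 <= eps -> eps <= 1 / 25 ->
  (exists K : nat, (2 * n <= 4 ^ K)%N /\ 10 * K%:R * (22 / 5 * eps) ^+ 2 < (4 / 5) ^+ 2) ->
  romp_state Phi (Phi *m v) n I r -> Inv v I.
Proof.
move=> sv ric e0 e1 hK; elim => [|{}I {}r I' r' hst hI [rn [J [J0 [hid [hreg [-> hres]]]]]]].
  by rewrite /Inv set0D set0I cards0.
apply: (step_inv sv ric e0 e1 hK _ hI rn hid hreg); exact: state_good hst.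
Qed.

End Fin.

Theorem lemma3p5 (R : realType) (N d n : nat) (Phi : 'M[R]_(N, d))
  (v : 'cV[R]_d) (I : {set 'I_d}) (r : 'cV[R]_N) :
  (1 < n)%N ->
  let eps : R := (3 / 100) / Num.sqrt (ln (n%:R)) in
  RIC Phi (2 * n) eps ->
  v != 0 -> sparse n v ->
  let x := Phi *m v in
  romp_state Phi x n I r -> r != 0 ->
  let v0 := restrict (supp v :\: I) v in
  let x0 := Phi *m v0 in
  let u0 := Phi^T *m x0 in
  let u := Phi^T *m r in
  forall T : {set 'I_d}, (#|T| <= 2 * n)%N ->
    norm2 (restrict T (u0 - u)) <= (12 / 5) * eps * norm2 v0.
Proof.
move=> hn eps ric vn sv x hst rn v0 x0 u0 u T hT.
have [K [hK1 hK2]] := @K_bound R n hn.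
set L := ln (n%:R : R) in hK2.
have L2 : ln 2 <= L.
  rewrite /L ler_ln ?posrE ?ler_nat //; last by rewrite ltr0n; lia.
have Lg := ln2_ge R.
have Lp : 0 < L by lra.
have sL : 0 < Num.sqrt L by rewrite sqrtr_gt0.
have sL2 : Num.sqrt L ^+ 2 = L by rewrite sqr_sqrtr // ltW.
have e0 : 0 <= eps by rewrite /eps; apply: divr_ge0; [lra | exact: ltW sL].
have es : eps * Num.sqrt L = 3 / 100 by rewrite /eps -/L (divfK (negbT (gt_eqF sL))).
have s34 : 3 / 4 <= Num.sqrt L.
  have : (3 / 4 : R) = Num.sqrt ((3 / 4) ^+ 2) by rewrite sqrtr_sqr ger0_norm //; lra.
  move=> ->; rewrite ler_sqrt //; lra.
have e25 : eps <= 1 / 25 by nra.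
have e11 : eps <= 1 / 11 by lra.
have eL : eps ^+ 2 * L = 9 / 10000.
  by rewrite -sL2 -exprMn es expr2; lra.
have hK : exists K : nat, (2 * n <= 4 ^ K)%N /\ 10 * K%:R * (22 / 5 * eps) ^+ 2 < (4 / 5) ^+ 2.
  exists K; split => //.
  rewrite -(ltr_pM2r Lp) exprMn.
  have h : K%:R * (eps ^+ 2 * L) = K%:R * (9 / 10000) by rewrite eL.
  have K0 : 0 <= K%:R :> R by rewrite ler0n.
  lra.
have g := @state_good R N d n Phi v I r hst.
have hI := @state_inv R N d n Phi v eps I r sv ric e0 e25 hK hst.
exact: (l35 sv ric e0 e11 g hI hT).
Qed.
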